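(* Let $G^{Init}$ be a gene tree for a gene set $\Gamma$, let $\mathcal G=\{G_1,\dots,G_k\}$ be a set of separated subtrees of $G^{Init}$ with $\bigcup_i\mathcal L(G_i)=\Gamma$, and let $G^{TR}$ be a tree for $\Gamma$ that displays every $G_i$ and is triplet respecting. Then for every node $x$ of $G^{Init}$ with $|\mathcal G(x)|\ge 2$, there exists a node $y$ of $G^{TR}$ such that $\mathcal L(y)=\mathcal L(x)$.
   Context: All trees are rooted and binary; $\mathcal L(x)$ denotes the set of leaves below node $x$ and $T[x]$ the subtree rooted at $x$. For $L'\subseteq\mathcal L(T)$, $T|_{L'}$ is obtained from the subtree rooted at $lca_T(L')$ by removing leaves not in $L'$ and suppressing internal degree-2 nodes other than the root; $T$ displays $T'$ if $T|_{\mathcal L(T')}$ is isomorphic to $T'$ preserving leaf labels. $\mathcal G$ is a set of separated subtrees of $G^{Init}$ if $G_i=G^{Init}[v_i]$ for pairwise separated nodes $v_i$ (none an ancestor of another). For a node $x$ of $G^{Init}$, $\mathcal G(x)$ is the set of trees of $\mathcal G$ that are subtrees of $G^{Init}[x]$. A tree $G^{TR}$ for $\Gamma$ displaying every $G_i$ is triplet respecting if for any three distinct trees $G_{i_1},G_{i_2},G_{i_3}\in\mathcal G$ and genes $a\in\mathcal L(G_{i_1})$, $b\in\mathcal L(G_{i_2})$, $c\in\mathcal L(G_{i_3})$, $G^{Init}|_{\{a,b,c\}}=G^{TR}|_{\{a,b,c\}}$. *)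

(* Defs.v *)
From mathcomp Require Import all_boot.
From Stdlib Require List.
Set Implicit Arguments. Unset Strict Implicit. Unset Printing Implicit Defensive.

Inductive tree (A : Type) : Type :=
| Leaf of A
| Node of tree A & tree A.
Arguments Leaf {A}.
Arguments Node {A}.

Section Trees.
Variable A : eqType.

Fixpoint leaves (t : tree A) : seq A :=
  match t with Leaf a => [:: a] | Node l r => leaves l ++ leaves r end.

(* Nodes of T, identified with the subtrees T[x] rooted at them
   (with pairwise distinct leaf labels this identification is faithful). *)
Fixpoint subtrees (t : tree A) : seq (tree A) :=
  match t with
  | Leaf _ => [:: t]
  | Node l r => t :: (subtrees l ++ subtrees r)
  end.

Definition tree_for (Gamma : seq A) (t : tree A) : Prop :=
  uniq (leaves t) /\ leaves t =i Gamma.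

(* T|_{L'}: keep leaves in L', take the subtree at their lca and suppress
   degree-2 nodes; None when no leaf of T lies in L'. *)
Fixpoint restrict (L : pred A) (t : tree A) : option (tree A) :=
  match t with
  | Leaf a => if L a then Some (Leaf a) else None
  | Node l r =>
      match restrict L l, restrict L r with
      | Some l', Some r' => Some (Node l' r')
      | Some l', None => Some l'
      | None, Some r' => Some r'
      | None, None => None
      end
  end.

Fixpoint iso (t u : tree A) : bool :=
  match t, u with
  | Leaf a, Leaf b => a == b
  | Node l r, Node l' r' => (iso l l' && iso r r') || (iso l r' && iso r l')
  | _, _ => false
  end.

Definition opt_iso (t u : option (tree A)) : bool :=
  match t, u with
  | Some t, Some u => iso t u
  | None, None => true
  | _, _ => false
  end.

Definition displays (t t' : tree A) : bool :=
  opt_iso (restrict (fun a => a \in leaves t') t) (Some t').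

(* Gs : 'I_k -> tree A is a set of separated subtrees of GI:
   each Gs i is GI[v_i] for a node v_i of GI, and for i <> j
   v_i is not a descendant (or equal) of v_j. *)
Definition separated_subtrees (GI : tree A) (k : nat) (Gs : 'I_k -> tree A) : Prop :=
  (forall i, Stdlib.Lists.List.In (Gs i) (subtrees GI)) /\
  (forall i j, i != j -> ~ Stdlib.Lists.List.In (Gs i) (subtrees (Gs j))).

Definition triplet_respecting (GI : tree A) (k : nat) (Gs : 'I_k -> tree A)
    (GTR : tree A) : Prop :=
  forall i1 i2 i3 : 'I_k, i1 != i2 -> i1 != i3 -> i2 != i3 ->
  forall a b c, a \in leaves (Gs i1) -> b \in leaves (Gs i2) -> c \in leaves (Gs i3) ->
    opt_iso (restrict (fun g => g \in [:: a; b; c]) GI)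
            (restrict (fun g => g \in [:: a; b; c]) GTR).

End Trees.

(* Main.v *)
Require Import Defs.
From mathcomp Require Import all_boot.
From Stdlib Require List.
Import Stdlib.Lists.List (In, in_or_app, in_app_or).
Set Implicit Arguments. Unset Strict Implicit.

Section Aux.
Variable A : eqType.
Implicit Types t u z w : tree A.

Lemma inappP (x : tree A) (l m : seq (tree A)) : In x (l ++ m) -> In x l \/ In x m.
Proof. exact: in_app_or. Qed.

Lemma sub_refl t : In t (subtrees t).
Proof. by case: t => /= *; left. Qed.

Lemma sub_trans t u v : In u (subtrees t) -> In v (subtrees u) -> In v (subtrees t).
Proof.
elim: t => [a|l IHl r IHr] /=.
  by case=> // <-.
case=> [<- //|/inappP [H|H]] Hv; right; apply: in_or_app; [left|right]; eauto.
Qed.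

Lemma sub_leaves t u : In u (subtrees t) -> {subset leaves u <= leaves t}.
Proof.
elim: t => [a|l IHl r IHr] /=.
  by case=> // <-.
case=> [<- //|/inappP [H|H]] g Hg; rewrite mem_cat.
  by rewrite (IHl H g Hg).
by rewrite (IHr H g Hg) orbT.
Qed.

Arguments sub_leaves [t u] _ x _.

Lemma leaves_ne t : exists a, a \in leaves t.
Proof.
elim: t => [a|l [a Ha] r _] /=; first by exists a; rewrite inE.
by exists a; rewrite mem_cat Ha.
Qed.

Lemma comparable T z w a : uniq (leaves T) -> In z (subtrees T) -> In w (subtrees T) ->
  a \in leaves z -> a \in leaves w -> In z (subtrees w) \/ In w (subtrees z).
Proof.
elim: T => [b|l IHl r IHr] /=.
  by move=> _ [<-|//] [<-|//] _ _; left; apply: sub_refl.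
rewrite cat_uniq => /and3P [Ul Dis Ur].
have Hd : forall g, g \in leaves l -> g \in leaves r -> False.
  move=> g Hl Hr; move/hasP: Dis; apply; exists g => //.
case=> [<-|/inappP [Hz|Hz]].
  by move=> Hw _ _; right.
- case=> [<-|/inappP [Hw|Hw]] Ha Hb.
  + by left; right; apply: in_or_app; left.
  + by apply: IHl.
  + by exfalso; apply: (Hd a); [exact: (sub_leaves Hz a Ha)|exact: (sub_leaves Hw a Hb)].
- case=> [<-|/inappP [Hw|Hw]] Ha Hb.
  + by left; right; apply: in_or_app; right.
  + by exfalso; apply: (Hd a); [exact: (sub_leaves Hw a Hb)|exact: (sub_leaves Hz a Ha)].
  + by apply: IHr.
Qed.

Lemma restrict_leaves (S : pred A) t :
  (match restrict S t with Some u => leaves u | None => [::] end) = filter S (leaves t).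
Proof.
elim: t => [a|l IHl r IHr] /=.
  by case: (S a).
rewrite filter_cat -IHl -IHr.
by case: (restrict S l) => [l'|]; case: (restrict S r) => [r'|] //=; rewrite cats0.
Qed.

Lemma restrict_sub (S : pred A) t z z' : In z (subtrees t) -> restrict S z = Some z' ->
  exists t', restrict S t = Some t' /\ In z' (subtrees t').
Proof.
elim: t => [a|l IHl r IHr] /=.
  case=> // <- Ez; exists z'; split => //; apply: sub_refl.
case=> [<-|/inappP [Hz|Hz]] Hr.
  by exists z'; split => //; apply: sub_refl.
- have [l' [-> H]] := IHl Hz Hr.
  case: (restrict S r) => [r'|].
    by exists (Node l' r'); split => //=; right; apply: in_or_app; left.
  by exists l'.
- have [r' [-> H]] := IHr Hz Hr.
  case: (restrict S l) => [l'|].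
    by exists (Node l' r'); split => //=; right; apply: in_or_app; right.
  by exists r'.
Qed.

Lemma restrict_back (S : pred A) t t' z' : restrict S t = Some t' -> In z' (subtrees t') ->
  exists z, In z (subtrees t) /\ restrict S z = Some z'.
Proof.
elim: t t' => [a|l IHl r IHr] t' /=.
  case Ea: (S a) => //; case=> <- /= [<-|//]; exists (Leaf a); split; first by left.
  by rewrite /= Ea.
have lift_l : forall z, In z (subtrees l) -> In z (subtrees (Node l r)).
  by move=> z Hz /=; right; apply: in_or_app; left.
have lift_r : forall z, In z (subtrees r) -> In z (subtrees (Node l r)).
  by move=> z Hz /=; right; apply: in_or_app; right.
case El: (restrict S l) => [l'|]; case Er: (restrict S r) => [r'|] // [<-].
- case=> [<-|/inappP [H|H]].
  + by exists (Node l r); split; [left|rewrite /= El Er].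
  + by have [z [? ?]] := IHl _ El H; exists z; split => //; apply: lift_l.
  + by have [z [? ?]] := IHr _ Er H; exists z; split => //; apply: lift_r.
- by move=> H; have [z [? ?]] := IHl _ El H; exists z; split => //; apply: lift_l.
- by move=> H; have [z [? ?]] := IHr _ Er H; exists z; split => //; apply: lift_r.
Qed.

Lemma iso_leaves t u : iso t u -> leaves u =i leaves t.
Proof.
elim: t u => [a|l IHl r IHr] [b|l' r'] //=.
  by move/eqP => ->.
case/orP => /andP [H1 H2] g; rewrite !mem_cat (IHl _ H1) (IHr _ H2) //.
by rewrite orbC.
Qed.

Lemma iso_sub t u z : iso t u -> In z (subtrees t) ->
  exists w, In w (subtrees u) /\ leaves w =i leaves z.
Proof.
elim: t u => [a|l IHl r IHr] [b|l' r'] //=.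
  by move/eqP => -> [<-|//]; exists (Leaf b); split; [left|].
move=> Hiso.
case=> [<-|/inappP [Hz|Hz]].
  exists (Node l' r'); split; first by left.
  by apply: (iso_leaves (t := Node l r)).
- case/orP: Hiso => /andP [H1 H2].
  + have [w [Hw Hl]] := IHl _ H1 Hz; exists w; split => //.
    by right; apply: in_or_app; left.
  + have [w [Hw Hl]] := IHl _ H1 Hz; exists w; split => //.
    by right; apply: in_or_app; right.
- case/orP: Hiso => /andP [H1 H2].
  + have [w [Hw Hl]] := IHr _ H2 Hz; exists w; split => //.
    by right; apply: in_or_app; right.
  + have [w [Hw Hl]] := IHr _ H2 Hz; exists w; split => //.
    by right; apply: in_or_app; left.
Qed.

Definition sep T (a b c : A) := exists z, In z (subtrees T) /\
  a \in leaves z /\ b \in leaves z /\ c \notin leaves z.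

Lemma sep_transfer T1 T2 a b c :
  opt_iso (restrict (fun g => g \in [:: a; b; c]) T1)
          (restrict (fun g => g \in [:: a; b; c]) T2) ->
  sep T1 a b c -> sep T2 a b c.
Proof.
set S := (fun g => g \in [:: a; b; c]).
move=> Hiso [z [Hz [Ha [Hb Hc]]]].
have Rz := restrict_leaves S z.
case Ez: (restrict S z) Rz => [z'|] Rz; last first.
  have : a \in filter S (leaves z) by rewrite mem_filter /S !inE eqxx Ha.
  by rewrite -Rz.
have [t1 [E1 H1]] := restrict_sub Hz Ez.
move: Hiso; rewrite E1; case E2: (restrict S T2) => [t2|] // Hi.
have [w [Hw Lw]] := iso_sub Hi H1.
have [z2 [Hz2 Ez2]] := restrict_back E2 Hw.
have Rz2 := restrict_leaves S z2; rewrite Ez2 in Rz2.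
exists z2; split => //.
have mS : forall g, g \in leaves w -> g \in leaves z2.
  by move=> g; rewrite Rz2 mem_filter => /andP [].
split; [apply: mS|split; [apply: mS|]].
- by rewrite Lw Rz mem_filter /S !inE eqxx Ha.
- by rewrite Lw Rz mem_filter /S !inE eqxx orbT Hb.
apply/negP => Hc2.
have : c \in leaves w by rewrite Rz2 mem_filter /S !inE eqxx !orbT Hc2.
by rewrite Lw Rz mem_filter (negbTE Hc) andbF.
Qed.

Lemma descend T (X : seq A) : uniq (leaves T) -> (exists a, a \in X) ->
  (forall c, c \in leaves T -> c \notin X -> exists z, In z (subtrees T) /\
      {subset X <= leaves z} /\ c \notin leaves z) ->
  forall t, In t (subtrees T) -> {subset X <= leaves t} ->
  exists y, In y (subtrees t) /\ leaves y =i X.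
Proof.
move=> U [a Ha] Hc t; elim: t => [b|l IHl r IHr] Ht HX.
  exists (Leaf b); split; first by left.
  move=> g; apply/idP/idP; last by apply: HX.
  rewrite inE => /eqP ->.
  have := HX a Ha; rewrite inE => /eqP <-.
  done.
have Hl : In l (subtrees T) by apply: (sub_trans Ht) => /=; right; apply: in_or_app; left; apply: sub_refl.
have Hr : In r (subtrees T) by apply: (sub_trans Ht) => /=; right; apply: in_or_app; right; apply: sub_refl.
case: (boolP (all (fun g => g \in leaves l) X)) => [/allP Al|Nl].
  have [y [Hy Ly]] := IHl Hl Al; exists y; split => //.
  by right; apply: in_or_app; left.
case: (boolP (all (fun g => g \in leaves r) X)) => [/allP Ar|Nr].
  have [y [Hy Ly]] := IHr Hr Ar; exists y; split => //.
  by right; apply: in_or_app; right.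
exists (Node l r); split; first by left.
move=> g; apply/idP/idP; last by apply: HX.
move=> Hg; apply/negPn/negP => HgX.
have [z [Hz [Xz gz]]] := Hc g (sub_leaves Ht _ Hg) HgX.
case: (comparable U Hz Ht (Xz a Ha) (HX a Ha)).
  case=> [Ez|/inappP [H|H]].
  - by rewrite -Ez Hg in gz.
  - by move/negP: Nl; apply; apply/allP => h Hh; apply: (sub_leaves H); apply: Xz.
  - by move/negP: Nr; apply; apply/allP => h Hh; apply: (sub_leaves H); apply: Xz.
by move=> H; move/negP: gz; apply; apply: (sub_leaves H).
Qed.

End Aux.

Theorem lemma6 (A : eqType) (Gamma : seq A) (GI GTR : tree A)
    (k : nat) (Gs : 'I_k -> tree A) :
  tree_for Gamma GI ->
  separated_subtrees GI Gs ->
  (forall g, g \in Gamma <-> exists i, g \in leaves (Gs i)) ->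
  tree_for Gamma GTR ->
  (forall i, displays GTR (Gs i)) ->
  triplet_respecting GI Gs GTR ->
  forall x, Stdlib.Lists.List.In x (subtrees GI) ->
  (exists i j : 'I_k, i != j /\ Stdlib.Lists.List.In (Gs i) (subtrees x) /\ Stdlib.Lists.List.In (Gs j) (subtrees x)) ->
  exists y, Stdlib.Lists.List.In y (subtrees GTR) /\ leaves y =i leaves x.
Proof.
move=> [UI LI] [HsubG Hsep] Hcov [UT LT] _ Htr x Hx [i [j [Hij [Hi Hj]]]].
have xG : forall g, g \in leaves x -> g \in Gamma.
  by move=> g Hg; rewrite -LI; apply: (sub_leaves Hx).
have disj : forall m g, g \in leaves (Gs m) -> g \in leaves x ->
    forall c, c \in leaves (Gs m) -> c \in leaves x.
  move=> m g Hg Hgx c Hc.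
  case: (comparable UI (HsubG m) Hx Hg Hgx) => [H|H].
    by apply: (sub_leaves H).
  exfalso; case: (eqVneq i m) => [Eim|Nim].
    have Njm : j != m by rewrite -Eim eq_sym.
    by apply: (Hsep j m Njm); apply: (sub_trans H).
  by apply: (Hsep i m Nim); apply: (sub_trans H).
have sepC : forall c, c \in Gamma -> c \notin leaves x ->
    forall a b ma mb, a \in leaves (Gs ma) -> b \in leaves (Gs mb) -> ma != mb ->
    a \in leaves x -> b \in leaves x -> sep GTR a b c.
  move=> c Hc Hcx a b ma mb Ha Hb Nab Hax Hbx.
  have [mc Hmc] := (proj1 (Hcov c) Hc).
  have Nac : ma != mc.
    by apply/eqP => E; subst; move/negP: Hcx; apply; apply: (disj mc a).
  have Nbc : mb != mc.
    by apply/eqP => E; subst; move/negP: Hcx; apply; apply: (disj mc b).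
  apply: sep_transfer (Htr _ _ _ Nab Nac Nbc a b c Ha Hb Hmc) _.
  by exists x.
have cluster : forall c, c \in Gamma -> c \notin leaves x ->
    exists z, In z (subtrees GTR) /\ {subset leaves x <= leaves z} /\ c \notin leaves z.
  move=> c Hc Hcx.
  have [a0 Ha0] := leaves_ne (Gs i).
  have [b0 Hb0] := leaves_ne (Gs j).
  have Ha0x := sub_leaves Hi Ha0.
  have Hb0x := sub_leaves Hj Hb0.
  have [z0 [Hz0 [a0z0 [b0z0 cz0]]]] := sepC c Hc Hcx _ _ _ _ Ha0 Hb0 Hij Ha0x Hb0x.
  have point : forall a, a \in leaves x -> exists z, In z (subtrees GTR) /\
      a0 \in leaves z /\ a \in leaves z /\ c \notin leaves z.
    move=> a Hax.
    have [m Hm] := proj1 (Hcov a) (xG a Hax).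
    case: (eqVneq m i) => [Emi|Nmi].
      subst m.
      have Nji : j != i by rewrite eq_sym.
      have [z1 [Hz1 [b0z1 [az1 cz1]]]] := sepC c Hc Hcx _ _ _ _ Hb0 Hm Nji Hb0x Hax.
      case: (comparable UT Hz0 Hz1 b0z0 b0z1) => H.
        exists z1; split => //; split => //; apply: (sub_leaves H) => //.
      exists z0; split => //; split => //; split => //; apply: (sub_leaves H) => //.
    have Nim : i != m by rewrite eq_sym.
    exact: sepC c Hc Hcx _ _ _ _ Ha0 Hm Nim Ha0x Hax.
  have fld : forall s : seq A, {subset s <= leaves x} -> exists z, In z (subtrees GTR) /\
      a0 \in leaves z /\ {subset s <= leaves z} /\ c \notin leaves z.
    elim=> [|a s IH] Hs.
      by exists z0; split => //; split => //; split.
    have [z [Hz [a0z [sz cz]]]] : exists z, In z (subtrees GTR) /\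
      a0 \in leaves z /\ {subset s <= leaves z} /\ c \notin leaves z.
      by apply: IH => g Hg; apply: Hs; rewrite inE Hg orbT.
    have [z1 [Hz1 [a0z1 [az1 cz1]]]] := point a (Hs a (mem_head _ _)).
    case: (comparable UT Hz Hz1 a0z a0z1) => H.
      exists z1; split => //; split => //; split => // g; rewrite inE.
      by case/orP => [/eqP ->//|Hg]; apply: (sub_leaves H); apply: sz.
    exists z; split => //; split => //; split => // g; rewrite inE.
    by case/orP => [/eqP ->|Hg]; [apply: (sub_leaves H)|apply: sz].
  have [z [Hz [_ [sz cz]]]] := fld (leaves x) (fun g H => H).
  by exists z.
have [a Ha] := leaves_ne x.
have Hc' : forall c, c \in leaves GTR -> c \notin leaves x -> exists z, In z (subtrees GTR) /\
      {subset leaves x <= leaves z} /\ c \notin leaves z.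
  by move=> c Hc Hcx; apply: cluster => //; rewrite -LT.
have HX : {subset leaves x <= leaves GTR}.
  by move=> g Hg; rewrite LT; apply: xG.
have [y [Hy Ly]] := descend UT (ex_intro _ a Ha) Hc' (sub_refl GTR) HX.
by exists y.
Qed.
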